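(* Let $T>0$, $\mu>0$, $U>0$ with $UJ(T)<\mu/2$. Then every minimizer $(\gamma,\alpha,\rho_0)$ of $\mathcal{F}$ over $\mathcal{D}$ has $\rho_0\neq0$.
   Context: Let $\mathbb{T}^3=[-\pi,\pi]^3$ with periodic identification and normalized Haar measure $dp$. Let $\varepsilon(p)=4\sum_{k=1}^3\sin^2(p_k/2)$. $\mathcal{D}=\{(\gamma,\alpha,\rho_0): \gamma\in L^1(\mathbb{T}^3),\ \gamma\ge0,\ \alpha^2\le\gamma(1+\gamma)\text{ a.e.},\ \rho_0\ge0\}$. With $\beta=\sqrt{(\tfrac12+\gamma)^2-\alpha^2}$, $S(\gamma,\alpha)=\int\big[(\beta+\tfrac12)\ln(\beta+\tfrac12)-(\beta-\tfrac12)\ln(\beta-\tfrac12)\big]dp$, and $\mathcal{F}(\gamma,\alpha,\rho_0)=\int(\varepsilon-\mu)\gamma\,dp-\mu\rho_0-TS(\gamma,\alpha)+\frac U2(\int\alpha)^2+U(\int\gamma)^2+U\rho_0\int\alpha+2U\rho_0\int\gamma+\frac U2\rho_0^2$ (integrals over $\mathbb{T}^3$). $J(T)=\int_{\mathbb{T}^3}(e^{\varepsilon(p)/T}-1)^{-1}dp$. *)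

(* Defs.v *)
From HB Require Import structures.
From mathcomp Require Import all_boot all_order all_algebra.
From mathcomp Require Import all_classical all_reals all_analysis.
Set Implicit Arguments. Unset Strict Implicit. Unset Printing Implicit Defensive.
Import Order.TTheory GRing.Theory Num.Theory.
Import numFieldNormedType.Exports.
Local Open Scope classical_set_scope.
Local Open Scope ring_scope.

Section Bogoliubov.
Variable R : realType.

(* points of T^3 are represented by points of R^3 = (R*R)*R in the box [-pi,pi]^3 *)
Definition pt := ((R * R) * R)%type.

Definition leb3 := (((@lebesgue_measure R) \x (@lebesgue_measure R)) \x (@lebesgue_measure R))%E.

Definition box : set pt :=
  [set p | (- pi <= p.1.1 <= pi) /\ (- pi <= p.1.2 <= pi) /\ (- pi <= p.2 <= pi)].

(* integral over T^3 against the normalized Haar measure dp = d^3p/(2 pi)^3 *)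
Definition tint (f : pt -> R) : R := Rintegral leb3 box f / (2 * pi) ^+ 3.

(* extended-real version (used for J, whose integrand is nonnegative) *)
Definition tintE (f : pt -> R) : \bar R :=
  ((((2 * pi) ^+ 3)^-1)%:E * \int[leb3]_(p in box) (f p)%:E)%E.

Definition eps (p : pt) : R :=
  4 * (sin (p.1.1 / 2) ^+ 2 + sin (p.1.2 / 2) ^+ 2 + sin (p.2 / 2) ^+ 2).

Definition Jfun (T : R) : \bar R := tintE (fun p => (expR (eps p / T) - 1)^-1).

Definition beta (g a : pt -> R) (p : pt) : R :=
  Num.sqrt ((2^-1 + g p) ^+ 2 - a p ^+ 2).

Definition entropy (g a : pt -> R) : R :=
  tint (fun p => (beta g a p + 2^-1) * ln (beta g a p + 2^-1)
                 - (beta g a p - 2^-1) * ln (beta g a p - 2^-1)).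

Definition inD (g a : pt -> R) (rho0 : R) : Prop :=
  [/\ leb3.-integrable box (EFin \o g),
      measurable_fun box a,
      {ae leb3, forall p, box p -> 0 <= g p /\ a p ^+ 2 <= g p * (1 + g p)}
    & 0 <= rho0].

Definition Ffun (T mu U : R) (g a : pt -> R) (rho0 : R) : R :=
  tint (fun p => (eps p - mu) * g p) - mu * rho0 - T * entropy g a
  + U / 2 * (tint a) ^+ 2 + U * (tint g) ^+ 2 + U * rho0 * tint a
  + 2 * U * rho0 * tint g + U / 2 * rho0 ^+ 2.

Definition is_minimizer (T mu U : R) (g a : pt -> R) (rho0 : R) : Prop :=
  inD g a rho0 /\
  forall (g' a' : pt -> R) (rho0' : R), inD g' a' rho0' ->
    Ffun T mu U g a rho0 <= Ffun T mu U g' a' rho0'.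

End Bogoliubov.

(* Main.v *)
Require Import Defs.
From HB Require Import structures.
From mathcomp Require Import all_boot all_order all_algebra.
From mathcomp Require Import all_classical all_reals all_analysis.
From mathcomp Require Import ring lra measurable_realfun.
Import Order.TTheory GRing.Theory Num.Theory.
Local Open Scope classical_set_scope.
Local Open Scope ring_scope.
Import numFieldNormedType.Exports.
Section reals.
Variable R : realType.
Implicit Types x y : R.

Definition sig x : R := (x + 1) * ln (x + 1) - x * ln x.

Lemma ln_le_sub1 x : 0 < x -> ln x <= x - 1.
Proof.
move=> x0; have h := @le_ln1Dx R (x - 1).
by rewrite (_ : 1 + (x - 1) = x) in h; [apply: h; lra | ring].
Qed.

Lemma sig_tangent x y : 0 < x -> 0 <= y ->
  sig y <= sig x + (y - x) * (ln (x + 1) - ln x).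
Proof.
move=> x0 y0; rewrite /sig.
have -> : (x + 1) * ln (x + 1) - x * ln x + (y - x) * (ln (x + 1) - ln x)
  = (y + 1) * ln (x + 1) - y * ln x by ring.
have [->|y0'] := eqVneq y 0.
  have := @ln_ge0 R (x + 1); rewrite add0r ln1 => h; have := h ltac:(lra); lra.
have yp : 0 < y by rewrite lt_neqAle eq_sym y0' y0.
have h1 : ln ((x * (y + 1)) / (y * (x + 1))) <= (x * (y + 1)) / (y * (x + 1)) - 1.
  by apply: ln_le_sub1; apply: divr_gt0; apply: mulr_gt0; lra.
have h2 : ln ((y + 1) / (x + 1)) <= (y + 1) / (x + 1) - 1.
  by apply: ln_le_sub1; apply: divr_gt0; lra.
rewrite ln_div ?posrE in h2; [|lra|lra].
rewrite ln_div ?posrE in h1; [|apply: mulr_gt0; lra|apply: mulr_gt0; lra].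
rewrite !lnM ?posrE in h1; [|lra|lra|lra|lra].
have h1' := ler_wpM2l (ltW yp) h1.
have e1 : y * ((x * (y + 1)) / (y * (x + 1)) - 1) = x * (y + 1) / (x + 1) - y.
  by field; lra.
have e2 : x * (y + 1) / (x + 1) + (y + 1) / (x + 1) = y + 1 by field; lra.
rewrite e1 in h1'.
lra.
Qed.


Lemma sig_ge0 y : 0 <= y -> 0 <= sig y.
Proof.
move=> y0; rewrite /sig.
have [->|yne] := eqVneq y 0; first by rewrite add0r ln1 !mul0r mulr0 subr0.
have yp : 0 < y by rewrite lt_neqAle eq_sym yne y0.
have h : ln y <= ln (y + 1) by rewrite ler_ln ?posrE; lra.
have h' : y * ln y <= y * ln (y + 1) by rewrite ler_wpM2l //; lra.
have := @ln_ge0 R (y + 1) ltac:(lra); nra.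
Qed.

Lemma sig_le y : 0 <= y -> sig y <= y + 1.
Proof.
move=> y0; rewrite /sig.
have [->|yne] := eqVneq y 0.
  by rewrite add0r ln1 !mul0r mulr0 subr0; lra.
have yp : 0 < y by rewrite lt_neqAle eq_sym yne y0.
have h1 : ln (y + 1) <= y by have := le_ln1Dx (lt_le_trans (@ltrN10 R) y0); rewrite addrC.
have h2 : ln ((y + 1) / y) <= (y + 1) / y - 1 by apply: ln_le_sub1; apply: divr_gt0; lra.
rewrite ln_div ?posrE in h2; [|lra|lra].
have h2' := ler_wpM2l (ltW yp) h2.
have e : y * ((y + 1) / y - 1) = 1 by field; lra.
rewrite e in h2'.
lra.
Qed.

Lemma gibbs (e T y : R) : 0 < e -> 0 < T -> 0 <= y ->
  e * (expR (e / T) - 1)^-1 - T * sig (expR (e / T) - 1)^-1 <= e * y - T * sig y.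
Proof.
move=> e0 T0 y0.
set s := (expR (e / T) - 1)^-1.
have E1 : 1 < expR (e / T) by rewrite expR_gt1 divr_gt0.
have s0 : 0 < s by rewrite /s invr_gt0; lra.
have hl : ln (s + 1) - ln s = e / T.
  rewrite -ln_div ?posrE; [|lra|lra].
  have -> : (s + 1) / s = expR (e / T) by rewrite /s; field; lra.
  by rewrite expRK.
have := @sig_tangent s y s0 y0; rewrite hl => h.
have h' := ler_wpM2l (ltW T0) h.
have ee : T * ((y - s) * (e / T)) = (y - s) * e by field; lra.
have h'' : T * sig y <= T * sig s + (y - s) * e by rewrite -ee -mulrDr.
lra.
Qed.

Lemma ent_sig (b : R) :
  (b + 2^-1) * ln (b + 2^-1) - (b - 2^-1) * ln (b - 2^-1) = sig (b - 2^-1).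
Proof. by rewrite /sig (_ : b - 2^-1 + 1 = b + 2^-1) //; field. Qed.

Lemma beta_bounds (g a : R) : 0 <= g -> a ^+ 2 <= g * (1 + g) ->
  2^-1 <= Num.sqrt ((2^-1 + g) ^+ 2 - a ^+ 2) <= 2^-1 + g.
Proof.
move=> g0 ha; apply/andP; split.
  have e : (2^-1 : R) = Num.sqrt (2^-1 ^+ 2) by rewrite sqrtr_sqr ger0_norm.
  rewrite [X in X <= _]e ler_sqrt; last by have := sqr_ge0 a; nra.
  nra.
have e : 2^-1 + g = Num.sqrt ((2^-1 + g) ^+ 2) by rewrite sqrtr_sqr ger0_norm //; lra.
rewrite [X in _ <= X]e ler_sqrt; last by apply: sqr_ge0.
have := sqr_ge0 a; lra.
Qed.

End reals.
Arguments sig {R}.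
Arguments sig_ge0 {R}.
Arguments sig_le {R}.
Arguments beta_bounds {R}.
Arguments gibbs {R}.
Arguments sig_tangent {R}.

Lemma final_ineq (R : realType) (mu U x y A rho : R) : 0 < U -> U * x < mu / 2 ->
  rho = (mu - 2 * U * x) / U ->
  - mu * x - mu * rho + U * x ^+ 2 + 2 * U * rho * x + U / 2 * rho ^+ 2
  < - mu * y + U / 2 * A ^+ 2 + U * y ^+ 2.
Proof.
move=> U0 hx hrho.
set m := mu / (2 * U).
have e : - mu * x - mu * rho + U * x ^+ 2 + 2 * U * rho * x + U / 2 * rho ^+ 2
   - (- mu * y + U / 2 * A ^+ 2 + U * y ^+ 2)
   = - U * ((x - m) ^+ 2 + (y - m) ^+ 2) - U / 2 * A ^+ 2.
  rewrite hrho /m; field; lra.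
have hxm : x - m < 0.
  rewrite /m subr_lt0 ltr_pdivlMr; last lra.
  lra.
have p1 : 0 < (x - m) ^+ 2 by rewrite exprn_even_gt0 //; lra.
have p2 : 0 <= (y - m) ^+ 2 by apply: sqr_ge0.
have p3 : 0 <= A ^+ 2 by apply: sqr_ge0.
have : - U * ((x - m) ^+ 2 + (y - m) ^+ 2) - U / 2 * A ^+ 2 < 0 by nra.
rewrite -e; lra.
Qed.

Lemma final2 (R : realType) (mu U T c Eg Gg Sg Egs Ggs Sgs A rho : R) :
  0 < c -> 0 < U -> U * (Ggs / c) < mu / 2 -> rho = (mu - 2 * U * (Ggs / c)) / U ->
  Egs - T * Sgs <= Eg - T * Sg ->
  (Eg - mu * Gg) / c - mu * 0 - T * (Sg / c) + U / 2 * A ^+ 2 + U * (Gg / c) ^+ 2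
    + U * 0 * A + 2 * U * 0 * (Gg / c) + U / 2 * 0 ^+ 2
  <= (Egs - mu * Ggs) / c - mu * rho - T * (Sgs / c) + U / 2 * 0 ^+ 2
    + U * (Ggs / c) ^+ 2 + U * rho * 0 + 2 * U * rho * (Ggs / c) + U / 2 * rho ^+ 2
  -> False.
Proof.
move=> c0 U0 hG hrho hK hF.
have h1 : (Egs - mu * Ggs) / c - T * (Sgs / c) = (Egs - T * Sgs) / c - mu * (Ggs / c).
  by field; lra.
have h2 : (Eg - mu * Gg) / c - T * (Sg / c) = (Eg - T * Sg) / c - mu * (Gg / c).
  by field; lra.
have hK' : (Egs - T * Sgs) / c <= (Eg - T * Sg) / c.
  by rewrite ler_wpM2r // invr_ge0 ltW.
have := @final_ineq R mu U (Ggs / c) (Gg / c) A rho U0 hG hrho.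
move: hF hK' h1 h2.
set x := Ggs / c; set y := Gg / c; set d := (Egs - T * Sgs) / c; set e := (Eg - T * Sg) / c.
set X1 := (Egs - mu * Ggs) / c; set X2 := (Eg - mu * Gg) / c.
set S1 := Sgs / c; set S2 := Sg / c.
rewrite !mulr0 !expr0n /= !mulr0 => hF hK' h1 h2 hfin.
lra.
Qed.

Section eps.
Variable R : realType.
Lemma sin_ne0 (x : R) : x != 0 -> - (pi / 2) <= x <= pi / 2 -> 0 < sin x ^+ 2.
Proof.
move=> x0 /andP[h1 h2].
have p0 := @pi_gt0 R.
have pos : forall z : R, 0 < z <= pi / 2 -> 0 < sin z.
  move=> z /andP[z0 z1]; have [zl|ze] := ltP z (pi / 2).
    by apply: sin_gt0_pihalf; rewrite z0 zl.
  have -> : z = pi / 2 by apply/eqP; rewrite eq_le z1 ze.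
  by rewrite sin_pihalf.
have [xn|xp] := ltP x 0.
  have := pos (- x) ltac:(apply/andP; split; lra).
  rewrite sinN => h; rewrite -sqrrN exprn_even_gt0 //; lra.
have := pos x ltac:(apply/andP; split; [rewrite lt_neqAle eq_sym x0 xp //|lra]).
move=> h; rewrite exprn_even_gt0 //; lra.
Qed.
End eps.
Section M.
Variable R : realType.
Local Notation I := (`[(- pi : R), pi]%classic).

Lemma box_eq : @box R = (I `*` I) `*` I.
Proof.
rewrite set_itvcc; apply/seteqP; split => -[[x y] z] /=.
  by move=> [h1 [h2 h3]].
by move=> [[h1 h2] h3].
Qed.

Definition T3 := ((measurableTypeR R * measurableTypeR R) * measurableTypeR R)%type.
Lemma mbox : measurable (@box R : set T3).
Proof. by rewrite box_eq; apply: measurableX; [apply: measurableX|]. Qed.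

Lemma lebI : (@lebesgue_measure R I = (pi + pi)%:E)%E.
Proof.
rewrite lebesgue_measure_itv /= lte_fin.
have p0 := @pi_gt0 R.
rewrite ifT; last lra.
by rewrite opprK -EFinD.
Qed.

Lemma leb3_box : (@leb3 R (@box R) < +oo)%E.
Proof.
rewrite box_eq /leb3. have := @product_measure1E _ _ _ _ R ((@lebesgue_measure R) \x (@lebesgue_measure R))%E (@lebesgue_measure R) (I `*` I) I. move=> ->; [|apply: measurableX => // |by []].
rewrite /=. rewrite (@product_measure1E _ _ _ _ R (@lebesgue_measure R) (@lebesgue_measure R) I I) // lebI.
rewrite /= lebI. by rewrite -!EFinM ltry.
Qed.

Lemma Znull : @leb3 R (setT `*` [set (0:R)%R]) = 0%E.
Proof.
rewrite /leb3 (@product_measure1E _ _ _ _ R ((@lebesgue_measure R) \x (@lebesgue_measure R))%E (@lebesgue_measure R)) //.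
by rewrite /= lebesgue_measure_set1 mule0.
Qed.


Lemma measurable_inv : measurable_fun [set: R] (@GRing.inv R).
Proof.
have -> : [set: R] = [set x | x != 0] `|` [set 0].
  apply/seteqP; split => x //= _; case: (eqVneq x 0) => [->|h]; [by right|by left].
apply/measurable_funU.
- by apply: measurable_realfun.open_measurable; exact: open_neq.
- exact: measurable_set1.
split; last exact: measurable_fun_set1.
apply: measurable_realfun.open_continuous_measurable_fun; first exact: open_neq.
by move=> x; rewrite inE /= => x0; apply: inv_continuous.
Qed.

Lemma measurable_sqrt : measurable_fun [set: R] (@Num.sqrt R).
Proof. exact: measurable_realfun.continuous_measurable_fun (@sqrt_continuous R). Qed.

Lemma measurable_hs : measurable_fun [set: R] (fun x : R => sin (x / 2) ^+ 2).
Proof.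
apply: measurable_funX; apply: measurableT_comp.
  exact: measurable_realfun.continuous_measurable_fun (@continuous_sin R).
exact: measurable_funM.
Qed.

Lemma measurable_eps : measurable_fun [set: pt R] (@eps R).
Proof.
rewrite /eps; apply: measurable_funM => //.
apply: measurable_funD; [apply: measurable_funD|].
- apply: (measurableT_comp measurable_hs).
  exact: measurableT_comp measurable_fst measurable_fst.
- apply: (measurableT_comp measurable_hs).
  exact: measurableT_comp measurable_snd measurable_fst.
- apply: (measurableT_comp measurable_hs).
  exact: measurable_snd.
Qed.

Lemma measurable_gs (T : R) : measurable_fun [set: pt R] (fun p => (expR (eps p / T) - 1)^-1).
Proof.
apply: (measurableT_comp measurable_inv).
apply: measurable_funB => //.
apply: (measurableT_comp (@measurable_expR R)).
by apply: measurable_funM => //; exact: measurable_eps.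
Qed.

Lemma measurable_ent (D : set (pt R)) (g a : pt R -> R) : measurable D ->
  measurable_fun D g -> measurable_fun D a ->
  measurable_fun D (fun p => (beta g a p + 2^-1) * ln (beta g a p + 2^-1)
                 - (beta g a p - 2^-1) * ln (beta g a p - 2^-1)).
Proof.
move=> mD mg ma.
have mb : measurable_fun D (beta g a).
  rewrite /beta; apply: (measurableT_comp measurable_sqrt).
  apply: measurable_funB; apply: measurable_funX => //.
  exact: measurable_funD.
apply: measurable_funB; apply: measurable_funM.
- exact: measurable_funD.
- apply: (measurableT_comp (@measurable_ln R)); exact: measurable_funD.
- exact: measurable_funB.
- apply: (measurableT_comp (@measurable_ln R)); exact: measurable_funB.
Qed.

End M.

Section M2.
Variable R : realType.

Lemma eps_ge0 (p : pt R) : 0 <= eps p.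
Proof.
rewrite /eps; apply: mulr_ge0 => //.
by apply: addr_ge0; [apply: addr_ge0|]; apply: sqr_ge0.
Qed.

Lemma eps_le12 (p : pt R) : eps p <= 12.
Proof.
rewrite /eps.
have h : forall x : R, sin x ^+ 2 <= 1.
  by move=> x; rewrite sin2cos2; have := sqr_ge0 (cos x); lra.
have := h (p.1.1 / 2); have := h (p.1.2 / 2); have := h (p.2 / 2); lra.
Qed.

Lemma eps_gt0 (p : pt R) : box p -> p.2 != 0 -> 0 < eps p.
Proof.
move=> [_ [_ /andP[h1 h2]]] p0.
have p0' : p.2 / 2 != 0 by rewrite mulf_neq0 // invr_eq0.
have := @sin_ne0 R (p.2 / 2) p0' ltac:(apply/andP; split; lra).
rewrite /eps => h.
have := sqr_ge0 (sin (p.1.1 / 2)); have := sqr_ge0 (sin (p.1.2 / 2)); lra.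
Qed.

Lemma integrable_cst_box (k : R) : (@leb3 R).-integrable (@box R) (fun _ => k%:E).
Proof.
apply/integrableP; split; first exact: measurable_cst.
rewrite integral_cst /=; last exact: mbox.
by rewrite lte_mul_pinfty // leb3_box.
Qed.

Lemma integrable_epsM (f : pt R -> R) :
  (@leb3 R).-integrable (@box R) (EFin \o f) ->
  (@leb3 R).-integrable (@box R) (EFin \o (fun p => eps p * f p)).
Proof.
move=> hf.
have mf := measurable_int _ hf.
apply: (le_integrable (@mbox R) _ _ (integrableZl (@mbox R) 12 hf)).
  apply/measurable_EFinP; apply: measurable_funM.
    exact: measurable_funS (@measurable_eps R).
  exact/measurable_EFinP.
move=> p _ /=; rewrite lee_fin normrM [X in _ <= X]normrM.
rewrite (ger0_norm (eps_ge0 p)) (ger0_norm (_ : (0:R) <= 12)) //.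
by rewrite ler_wpM2r // eps_le12.
Qed.

Lemma Rint_lin (F E : pt R -> R) (k : R) :
  (@leb3 R).-integrable (@box R) (EFin \o F) ->
  (@leb3 R).-integrable (@box R) (EFin \o E) ->
  Rintegral (@leb3 R) (@box R) (fun p => F p - k * E p) =
  Rintegral (@leb3 R) (@box R) F - k * Rintegral (@leb3 R) (@box R) E.
Proof.
move=> iF iE; rewrite RintegralB //; first by rewrite RintegralZl //; exact: mbox.
- exact: mbox.
- exact: (integrableZl (@mbox R) k iE).
Qed.

Lemma integrable_lin (F E : pt R -> R) (k : R) :
  (@leb3 R).-integrable (@box R) (EFin \o F) ->
  (@leb3 R).-integrable (@box R) (EFin \o E) ->
  (@leb3 R).-integrable (@box R) (EFin \o (fun p => F p - k * E p)).
Proof.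
move=> iF iE.
by apply: (eq_integrable (@mbox R) _ _ _ (integrableB (@mbox R) iF (integrableZl (@mbox R) k iE))) => p _.
Qed.

End M2.

Theorem proposition4p4 (R : realType) (T mu U : R) :
  0 < T -> 0 < mu -> 0 < U ->
  (U%:E * Jfun T < (mu / 2)%:E)%E ->
  forall (g a : pt R -> R) (rho0 : R),
    is_minimizer T mu U g a rho0 -> rho0 != 0.
Proof.
move=> T0 mu0 U0 hJ g a rho0 [[ig ma hae r0] hmin].
apply/negP => /eqP rho00; subst rho0.
have mB := @mbox R.
pose gs := fun p : pt R => (expR (eps p / T) - 1)^-1.
have gs0 : forall p, 0 <= gs p.
  move=> p; rewrite /gs invr_ge0 subr_ge0 -expR0 ler_expR.
  by apply: divr_ge0; [exact: eps_ge0|exact: ltW].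
have mgs : measurable_fun (@box R) gs.
  exact: measurable_funS (@measurable_gs R T).
pose c : R := (2 * pi) ^+ 3.
have c0 : 0 < c by rewrite /c exprn_gt0 // mulr_gt0 // pi_gt0.
pose Igs := (\int[@leb3 R]_(p in @box R) (gs p)%:E)%E.
have Ige0 : (0 <= Igs)%E by apply: integral_ge0 => p _; rewrite lee_fin.
have Ifin : (Igs < +oo)%E.
  rewrite ltNge; apply/negP => h.
  have hI : Igs = +oo%E by apply/eqP; rewrite eq_le leey h.
  move: hJ; rewrite /Jfun /tintE -/gs -/Igs hI.
  rewrite gt0_muley ?lte_fin ?invr_gt0 // gt0_muley ?lte_fin //.
have IE : Igs = (fine Igs)%:E by rewrite fineK // ge0_fin_numE.
have hG : U * tint gs < mu / 2.
  move: hJ; rewrite /Jfun /tintE -/gs -/Igs IE => h.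
  have h2 : ((U * ((2 * pi) ^- 3 * fine Igs))%:E < (mu / 2)%:E)%E by exact: h.
  rewrite lte_fin in h2.
  by move: h2; rewrite /tint /Rintegral -/Igs (mulrC (fine Igs)).

have igs : (@leb3 R).-integrable (@box R) (EFin \o gs).
  apply/integrableP; split; first exact/measurable_EFinP.
  apply: le_lt_trans Ifin; rewrite le_eqVlt; apply/orP; left; apply/eqP.
  apply: eq_integral => p _ /=.
  by rewrite ger0_norm.
pose rho' := (mu - 2 * U * tint gs) / U.
have Hin : inD gs (fun _ => 0) rho'.
  split; first exact: igs.
  - by [].
  - apply: aeW => p _; split => //.
    by rewrite expr0n /=; apply: mulr_ge0 => //; apply: addr_ge0.
  - by apply: divr_ge0; [lra|exact: ltW].
have hF := hmin gs (fun _ => 0) rho' Hin.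

case: hae => N1 [mN1 N10 hN1].
pose Z : set (T3 R) := setT `*` [set (0:R)].
have mZ : measurable Z by apply: measurableX.
have Z0 : @leb3 R Z = 0%E by exact: Znull.
pose N := N1 `|` Z.
have mN : measurable N by apply: measurableU.
have N0 : @leb3 R N = 0%E.
  rewrite -N10; exact: (measureU0 (mu := @leb3 R) mN1 mZ Z0).
have good : forall p, (@box R `\` N) p ->
    [/\ 0 <= g p, a p ^+ 2 <= g p * (1 + g p) & 0 < eps p].
  move=> p [bp Np].
  have [Q1 Q2] : 0 <= g p /\ a p ^+ 2 <= g p * (1 + g p).
    apply: contrapT => nQ; apply: Np; left; apply: hN1 => /= h.
    by apply: nQ; apply: h.
  split => //; apply: eps_gt0 => //; apply/eqP => p20; apply: Np; right.
  by split.

have mg : measurable_fun (@box R) g.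
  exact: (measurable_EFinP _ _).1 (measurable_int _ ig).
pose eg := fun p => (beta g a p + 2^-1) * ln (beta g a p + 2^-1)
                 - (beta g a p - 2^-1) * ln (beta g a p - 2^-1).
pose es := fun p => (beta gs (fun _ => 0) p + 2^-1) * ln (beta gs (fun _ => 0) p + 2^-1)
                 - (beta gs (fun _ => 0) p - 2^-1) * ln (beta gs (fun _ => 0) p - 2^-1).
have esE : forall p, es p = sig (gs p).
  move=> p; rewrite /es ent_sig /beta expr0n /= subr0 sqrtr_sqr ger0_norm.
    by congr sig; ring.
  by have := gs0 p; lra.
have egE : forall p, (@box R `\` N) p -> eg p = sig (beta g a p - 2^-1)
    /\ 0 <= beta g a p - 2^-1 <= g p.
  move=> p /good [h1 h2 _]; split; first by rewrite /eg ent_sig.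
  have := beta_bounds _ _ h1 h2; rewrite -/(beta g a p) => /andP[b1 b2].
  by apply/andP; split; lra.
have ies : (@leb3 R).-integrable (@box R) (EFin \o es).
  have i1 := integrableD (@mbox R) (@integrable_cst_box R 1) igs.
  apply: (le_integrable (@mbox R) _ _ i1).
    apply/measurable_EFinP; apply: measurable_ent => //; exact: measurable_cst.
  move=> p _ /=; rewrite lee_fin esE.
  have := gs0 p => h; rewrite ger0_norm ?sig_ge0 // ger0_norm; last lra.
  by rewrite addrC sig_le.
have ieg : (@leb3 R).-integrable (@box R) (EFin \o eg).
  have meg : measurable_fun (@box R) (EFin \o eg).
    by apply/measurable_EFinP; apply: measurable_ent.
  apply/(negligible_integrable mN (@mbox R) meg N0).
  have i1 := integrableD (@mbox R) (@integrable_cst_box R 1) ig.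
  have i2 := integrableS (@mbox R) (measurableD (@mbox R) mN) (@subDsetl _ _ _) i1.
  apply: (le_integrable (measurableD (@mbox R) mN) _ _ i2).
    exact: measurable_funS meg.
  move=> p hp /=; rewrite lee_fin.
  have [-> /andP[n0 ng]] := egE p hp.
  have [h1 _ _] := good p hp.
  rewrite ger0_norm ?sig_ge0 // ger0_norm; last lra.
  by rewrite addrC; apply: le_trans (sig_le _ n0) _; lra.

pose Rint := fun f : pt R -> R => Rintegral (@leb3 R) (@box R) f.
have iepsg := @integrable_epsM R _ ig.
have iepsgs := @integrable_epsM R _ igs.
have mD : measurable (@box R `\` N) by apply: measurableD => //; exact: mbox.
have K : Rint (fun p => eps p * gs p - T * es p) <= Rint (fun p => eps p * g p - T * eg p).
  have iL := @integrable_lin R _ _ T iepsgs ies.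
  have iR := @integrable_lin R _ _ T iepsg ieg.
  have e1 : Rint (fun p => eps p * gs p - T * es p) =
      Rintegral (@leb3 R) (@box R `\` N) (fun p => eps p * gs p - T * es p).
    exact: (congr1 fine (negligible_integral mN (@mbox R) iL N0)).
  have e2 : Rint (fun p => eps p * g p - T * eg p) =
      Rintegral (@leb3 R) (@box R `\` N) (fun p => eps p * g p - T * eg p).
    exact: (congr1 fine (negligible_integral mN (@mbox R) iR N0)).
  rewrite e1 e2; apply: le_Rintegral => //.
  - exact: (integrableS (@mbox R) mD (@subDsetl _ _ _) iL).
  - exact: (integrableS (@mbox R) mD (@subDsetl _ _ _) iR).
  move=> p hp.
  have [h1 h2 he] := good p hp.
  have [egp /andP[n0 ng]] := egE p hp.
  rewrite esE egp /gs.
  have := gibbs (eps p) T (beta g a p - 2^-1) he T0 n0.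
  have := ler_wpM2l (@eps_ge0 R p) ng.
  lra.
have hEg : Rint (fun p => (eps p - mu) * g p) = Rint (fun p => eps p * g p) - mu * Rint g.
  rewrite /Rint -Rint_lin //; apply: eq_Rintegral => p _ /=; ring.
have hEgs : Rint (fun p => (eps p - mu) * gs p) = Rint (fun p => eps p * gs p) - mu * Rint gs.
  rewrite /Rint -Rint_lin //; apply: eq_Rintegral => p _ /=; ring.
have K2 : Rint (fun p => eps p * gs p) - T * Rint es <= Rint (fun p => eps p * g p) - T * Rint eg.
  by rewrite /Rint -!Rint_lin.
have h0 : tint (fun _ : pt R => 0) = 0.
  by rewrite /tint /Rintegral integral0 mul0r.
have t1 : tint (fun p => (eps p - mu) * g p) = (Rint (fun p => eps p * g p) - mu * Rint g) / c.
  by rewrite /tint -hEg.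
have t5 : tint (fun p => (eps p - mu) * gs p) = (Rint (fun p => eps p * gs p) - mu * Rint gs) / c.
  by rewrite /tint -hEgs.
have t2 : entropy g a = Rint eg / c by [].
have t6 : entropy gs (fun _ => 0) = Rint es / c by [].
have t3 : tint g = Rint g / c by [].
have t4 : tint gs = Rint gs / c by [].
move: hF; rewrite /Ffun t1 t5 t2 t6 t3 h0 /rho' t4.
rewrite t4 in hG.
exact: (@final2 R mu U T c _ _ _ _ _ _ (tint a) ((mu - 2 * U * (Rint gs / c)) / U) c0 U0 hG erefl K2).
Qed.
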